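(* Let $C\subseteq\mathbb{S}$ be an s-convex set. Then: (i) there is $u_0\in\mathbb{R}^n$ with $\|u_0\|=1$ such that $C\subseteq\{x\in\mathbb{R}^n\mid\langle x,u_0\rangle\ge0\}\cap\mathbb{S}$; (ii) if moreover $C$ is closed, there are $u_0\in\mathbb{R}^n$ with $\|u_0\|=1$ and $\alpha>0$ such that $C\subseteq\{x\in\mathbb{R}^n\mid\langle x,u_0\rangle\ge\alpha\}\cap\mathbb{S}$; in particular $C\subseteq\{x\in\mathbb{S}\mid \langle x,u_0\rangle>0\}$.
   Context: Standing setting: $n\ge 2$; $\mathbb{R}^n$ carries the usual inner product $\langle\cdot,\cdot\rangle$ and Euclidean norm $\|\cdot\|$; $o$ denotes the zero vector. $\Phi:\mathbb{R}^n\to\mathbb{R}_+:=[0,\infty)$ is a continuous function with $\Phi(tx)=t\Phi(x)$ for all $x\in\mathbb{R}^n$, $t\ge 0$, and $\Phi(x)=0$ iff $x=o$. Set $\mathbb{S}:=\{x\in\mathbb{R}^n\mid \Phi(x)=1\}$ (with the topology induced from $\mathbb{R}^n$), and $\rho:\mathbb{R}^n\to\{o\}\cup\mathbb{S}$, $\rho(x):=x/\Phi(x)$ for $x\neq o$, $\rho(o):=o$. For $x,y\in\mathbb{S}$, $\lambda\in[0,1]$, $\lambda x+_s(1-\lambda)y:=\rho(\lambda x+(1-\lambda)y)$. A nonempty set $S\subseteq\mathbb{S}$ is called s-convex if $\lambda x+_s(1-\lambda)y\in S$ for all $x,y\in S$ and $\lambda\in[0,1]$. *)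

(* Defs.v *)
(* R^n is 'rV[R]_n over R : realType. *)
From HB Require Import structures.
From mathcomp Require Import all_boot all_order all_algebra.
From mathcomp Require Import all_classical all_reals all_analysis.
Set Implicit Arguments. Unset Strict Implicit. Unset Printing Implicit Defensive.
Import Order.TTheory GRing.Theory Num.Theory.
Import numFieldNormedType.Exports.
Local Open Scope classical_set_scope.
Local Open Scope ring_scope.

Section Defs.
Variables (R : realType) (n : nat).

Definition dotv (x y : 'rV[R]_n) : R := \sum_(i < n) x ord0 i * y ord0 i.

Definition enorm (x : 'rV[R]_n) : R := Num.sqrt (dotv x x).

Definition gauge_like (Phi : 'rV[R]_n -> R) : Prop :=
  [/\ continuous Phi,
      (forall x, 0 <= Phi x),
      (forall x (t : R), 0 <= t -> Phi (t *: x) = t * Phi x)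
    & (forall x, Phi x = 0 <-> x = 0)].

Definition Ssph (Phi : 'rV[R]_n -> R) : set 'rV[R]_n := [set x | Phi x = 1].

Definition rho (Phi : 'rV[R]_n -> R) (x : 'rV[R]_n) : 'rV[R]_n :=
  if x == 0 then 0 else (Phi x)^-1 *: x.

Definition scomb (Phi : 'rV[R]_n -> R) (l : R) (x y : 'rV[R]_n) : 'rV[R]_n :=
  rho Phi (l *: x + (1 - l) *: y).

Definition s_convex (Phi : 'rV[R]_n -> R) (C : set 'rV[R]_n) : Prop :=
  [/\ C !=set0, C `<=` Ssph Phi &
      forall x y l, C x -> C y -> 0 <= l <= 1 -> C (scomb Phi l x y)].

Definition closed_in_S (Phi : 'rV[R]_n -> R) (C : set 'rV[R]_n) : Prop :=
  exists F : set 'rV[R]_n, closed F /\ C = F `&` Ssph Phi.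

End Defs.

(* Main.v *)
Require Import Defs.
From HB Require Import structures.
From mathcomp Require Import all_boot all_order all_algebra.
From mathcomp Require Import all_classical all_reals all_analysis.
From mathcomp Require Import finmap.
Import Order.TTheory GRing.Theory Num.Theory.
Import numFieldNormedType.Exports.
Local Open Scope classical_set_scope.
Local Open Scope ring_scope.
Section Dot.
Context {R : realType} {n : nat}.
Local Notation V := 'rV[R]_n.
Local Notation dot := (@dotv R n).

Lemma dotvC (x y : V) : dot x y = dot y x.
Proof. by apply: eq_bigr => i _; rewrite mulrC. Qed.

Lemma dotvDl (x y z : V) : dot (x + y) z = dot x z + dot y z.
Proof. by rewrite /dotv -big_split; apply: eq_bigr => i _; rewrite mxE mulrDl. Qed.

Lemma dotvZl a (x z : V) : dot (a *: x) z = a * dot x z.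
Proof. by rewrite /dotv mulr_sumr; apply: eq_bigr => i _; rewrite mxE mulrA. Qed.

Lemma dotv0l (z : V) : dot 0 z = 0.
Proof. by rewrite /dotv big1 // => i _; rewrite mxE mul0r. Qed.

Lemma dotvNl (x z : V) : dot (- x) z = - dot x z.
Proof. by rewrite -scaleN1r dotvZl mulN1r. Qed.

Lemma dotvBl (x y z : V) : dot (x - y) z = dot x z - dot y z.
Proof. by rewrite dotvDl dotvNl. Qed.

Lemma dotvDr (x y z : V) : dot z (x + y) = dot z x + dot z y.
Proof. by rewrite !(dotvC z) dotvDl. Qed.
Lemma dotvZr a (x z : V) : dot z (a *: x) = a * dot z x.
Proof. by rewrite !(dotvC z) dotvZl. Qed.
Lemma dotvBr (x y z : V) : dot z (x - y) = dot z x - dot z y.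
Proof. by rewrite !(dotvC z) dotvBl. Qed.
Lemma dotv0r (z : V) : dot z 0 = 0.
Proof. by rewrite dotvC dotv0l. Qed.

Lemma dotv_suml I (r : seq I) (P : pred I) (F : I -> V) z :
  dot (\sum_(i <- r | P i) F i) z = \sum_(i <- r | P i) dot (F i) z.
Proof.
apply: (big_morph (fun x => dot x z)); [by move=> x y; rewrite dotvDl | exact: dotv0l].
Qed.

Lemma dotv_ge0 (x : V) : 0 <= dot x x.
Proof. by apply: sumr_ge0 => i _; rewrite -expr2 sqr_ge0. Qed.

Lemma coord_sq_le (x : V) i : x ord0 i ^+ 2 <= dot x x.
Proof.
rewrite /dotv (bigD1 i) //= expr2 lerDl; apply: sumr_ge0 => j _.
by rewrite -expr2 sqr_ge0.
Qed.

Lemma dotv_eq0 (x : V) : dot x x = 0 -> x = 0.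
Proof.
move=> h; apply/rowP => i; rewrite mxE.
have := coord_sq_le x i; rewrite h => h2.
have : x ord0 i ^+ 2 = 0 by apply/le_anti; rewrite h2 sqr_ge0.
by move/eqP; rewrite sqrf_eq0 => /eqP.
Qed.

Lemma dotv_gt0 (x : V) : x != 0 -> 0 < dot x x.
Proof.
move=> x0; rewrite lt_neqAle dotv_ge0 andbT; apply/eqP => /esym /dotv_eq0.
by apply/eqP.
Qed.

Lemma enorm_sq (x : V) : enorm x ^+ 2 = dot x x.
Proof. by rewrite /enorm sqr_sqrtr // dotv_ge0. Qed.

Lemma normalize (x : V) : x != 0 ->
  exists2 t, 0 < t & enorm (t *: x) = 1 /\ dot (t *: x) (t *: x) = 1.
Proof.
move=> x0; have hp := dotv_gt0 x x0.
exists (Num.sqrt (dot x x))^-1; first by rewrite invr_gt0 sqrtr_gt0.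
have hd : dot ((Num.sqrt (dot x x))^-1 *: x) ((Num.sqrt (dot x x))^-1 *: x) = 1.
  rewrite dotvZl dotvZr mulrA -expr2 exprVn sqr_sqrtr ?mulVf //.
    by rewrite gt_eqF.
  exact: ltW.
by split => //; rewrite /enorm hd sqrtr1.
Qed.

End Dot.
From mathcomp Require Import ring lra.
Section Topo.
Context {R : realType} {n : nat}.
Local Notation V := 'rV[R]_n.
Local Notation dot := (@dotv R n).

Lemma cont_sum {T : topologicalType} {W : normedModType R} I (r : seq I)
   (F : I -> T -> W) :
  (forall i, continuous (F i)) -> continuous (fun x => \sum_(i <- r) F i x).
Proof.
move=> hF; elim: r => [|a r IH].
  under eq_fun do rewrite big_nil; exact: cst_continuous.
under eq_fun do rewrite big_cons.
by move=> x; apply: continuousD; [exact: hF | exact: IH].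
Qed.

Lemma cont_coord (i : 'I_n) : continuous (fun x : V => x ord0 i).
Proof. exact: coord_continuous. Qed.

Lemma cont_dotl (y : V) : continuous (fun x : V => dot x y).
Proof.
rewrite /dotv; apply: (@cont_sum _ _ _ _ (fun i (x : V) => x ord0 i * y ord0 i)).
by move=> i x; apply: continuousM; [exact: cont_coord | exact: cst_continuous].
Qed.

Lemma cont_dotvv : continuous (fun x : V => dot x x).
Proof.
rewrite /dotv; apply: (@cont_sum _ _ _ _ (fun i (x : V) => x ord0 i * x ord0 i)).
by move=> i x; apply: continuousM; exact: cont_coord.
Qed.

Lemma closed_dot_ge (y : V) a : closed [set x : V | a <= dot x y].
Proof.
have := cont_dotl y; rewrite continuous_closedP => /(_ _ (@closed_ge _ a)).
by [].
Qed.

Lemma closed_dot_eq (y : V) a : closed [set x : V | dot x y = a].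
Proof.
have := cont_dotl y; rewrite continuous_closedP => /(_ _ (@closed_eq _ a)).
by [].
Qed.

Lemma closed_dotvv_eq a : closed [set x : V | dot x x = a].
Proof.
have := cont_dotvv; rewrite continuous_closedP => /(_ _ (@closed_eq _ a)).
by [].
Qed.

Lemma compact_dot_bounded (A : set V) (M : R) :
  closed A -> (forall x, A x -> dot x x <= M) -> compact A.
Proof.
move=> cA hM.
have cB : compact [set v : V | forall i, `[- (M + 1), M + 1]%classic (v ord0 i)].
  by apply: (@rV_compact _ _ (fun=> `[- (M + 1), M + 1]%classic)) => i; exact: segment_compact.
apply: (subclosed_compact cA cB) => x /hM hx i /=.
have := coord_sq_le x i => h; rewrite in_itv /=.
have := dotv_ge0 x => h0.
apply/andP; split; nra.
Qed.

End Topo.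
Section Cone.
Context {R : realType} {n : nat}.
Local Notation V := 'rV[R]_n.
Local Notation dot := (@dotv R n).
Variables (Phi : V -> R) (C : set V).
Hypothesis hPhi : gauge_like Phi.
Hypothesis hC : s_convex Phi C.

Lemma Phi0 : Phi 0 = 0.
Proof. by case: hPhi => _ _ _ h; apply/h. Qed.

Lemma Phi_gt0 x : x != 0 -> 0 < Phi x.
Proof.
case: hPhi => _ hge _ h x0; rewrite lt_neqAle hge andbT eq_sym.
by apply/eqP => /h /eqP; rewrite (negbTE x0).
Qed.

Lemma C_S x : C x -> Phi x = 1.
Proof. by case: hC => _ h _ /h. Qed.

Lemma C_neq0 x : C x -> x != 0.
Proof. by move=> /C_S h; apply/eqP => x0; move: h; rewrite x0 Phi0 => /eqP; rewrite eq_sym oner_eq0. Qed.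

Lemma comb_neq0 x y l : C x -> C y -> 0 <= l <= 1 -> l *: x + (1 - l) *: y != 0.
Proof.
move=> Cx Cy hl; apply/eqP => h0.
case: hC => _ _ /(_ x y l Cx Cy hl); rewrite /scomb /rho h0 eqxx => /C_neq0.
by rewrite eqxx.
Qed.

Definition Kc (v : V) := exists t c, [/\ 0 < t, C c & v = t *: c].

Lemma Kc_neq0 v : Kc v -> v != 0.
Proof.
case=> t [c [t0 Cc ->]]; rewrite scaler_eq0 negb_or (gt_eqF t0) /=.
exact: C_neq0.
Qed.

Lemma Kc_scale t v : 0 < t -> Kc v -> Kc (t *: v).
Proof.
move=> t0 [s [c [s0 Cc ->]]]; exists (t * s), c; split => //.
  exact: mulr_gt0.
by rewrite scalerA.
Qed.

Lemma Kc_add v w : Kc v -> Kc w -> Kc (v + w).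
Proof.
move=> [t1 [c1 [t10 C1 ->]]] [t2 [c2 [t20 C2 ->]]].
set s := t1 + t2; have s0 : 0 < s by rewrite addr_gt0.
set l := t1 / s.
have hl : 0 <= l <= 1.
  apply/andP; split; first by rewrite divr_ge0 // ltW.
  by rewrite ler_pdivrMr // mul1r lerDl ltW.
set m := l *: c1 + (1 - l) *: c2.
have m0 : m != 0 by apply: comb_neq0.
have Cm : C (scomb Phi l c1 c2) by case: hC => _ _; apply.
have e : t1 *: c1 + t2 *: c2 = (s * Phi m) *: scomb Phi l c1 c2.
  rewrite /scomb /rho -/m (negbTE m0) scalerA -mulrA mulfV ?mulr1; last by rewrite gt_eqF // Phi_gt0.
  rewrite /m scalerDr !scalerA /l mulrCA mulfV ?gt_eqF // mulr1.
  congr (_ + _); congr (_ *: _).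
  by rewrite mulrBr mulr1 mulrCA mulfV ?gt_eqF // mulr1 /s addrC addKr.
rewrite e; exists (s * Phi m), (scomb Phi l c1 c2); split => //.
by rewrite mulr_gt0 // Phi_gt0.
Qed.

Lemma Kc_conv m (F : 'I_m -> V) (lam : 'rV[R]_m) :
  (forall i, C (F i)) -> (forall i, 0 <= lam ord0 i) ->
  \sum_i lam ord0 i = 1 -> Kc (\sum_i lam ord0 i *: F i).
Proof.
move=> CF lam0 lam1.
have : (\sum_i lam ord0 i *: F i = 0 /\ \sum_i lam ord0 i = 0) \/
       (Kc (\sum_i lam ord0 i *: F i) /\ 0 < \sum_i lam ord0 i).
  pose K (v : V) (s : R) := (v = 0 /\ s = 0) \/ (Kc v /\ 0 < s).
  apply: (@big_rec2 _ _ K); first by left.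
  move=> i v s _; rewrite /K; case=> [[-> ->]|[Kv s0]].
    rewrite !addr0; have := lam0 i; rewrite le_eqVlt => /orP [/eqP <-|li].
      by left; rewrite scale0r.
    by right; split => //; apply: Kc_scale => //; exists 1, (F i); rewrite scale1r; split.
  have := lam0 i; rewrite le_eqVlt => /orP [/eqP <-|li].
    by right; rewrite scale0r !add0r; split.
  right; split; last by rewrite addr_gt0.
  by apply: Kc_add => //; apply: Kc_scale => //; exists 1, (F i); rewrite scale1r; split.
case=> [[_ h]|[]//]; have := lam1; rewrite h => /eqP; by rewrite eq_sym oner_eq0.
Qed.

End Cone.
Section Finite.
Context {R : realType} {n : nat}.
Local Notation V := 'rV[R]_n.
Local Notation dot := (@dotv R n).

Lemma var_ineq (a b : R) : 0 <= b ->
  (forall t, 0 < t <= 1 -> 0 <= 2 * t * a + t ^+ 2 * b) -> 0 <= a.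
Proof.
move=> b0 h; rewrite leNgt; apply/negP => a0.
have ba : 0 < b - a by rewrite subr_gt0 (lt_le_trans a0 b0).
have := h (- a / (b - a)).
have t0 : 0 < - a / (b - a) by rewrite divr_gt0 // oppr_gt0.
have t1 : - a / (b - a) <= 1 by rewrite ler_pdivrMr // mul1r; lra.
rewrite t0 t1 => /(_ isT).
set t := - a / (b - a).
have ht : t * (b - a) = - a by rewrite /t mulfVK // gt_eqF.
move=> H; have E : t * (2 * a + t * b) = 2 * t * a + t ^+ 2 * b by ring.
have : 0 <= t * (2 * a + t * b) by rewrite E.
rewrite pmulr_rge0 // => H2.
have H3 : (b - a) * (2 * a + t * b) = a * (b - 2 * a).
  have -> : (b - a) * (2 * a + t * b) = 2 * a * (b - a) + (t * (b - a)) * b by ring.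
  rewrite ht; ring.
have : 0 <= (b - a) * (2 * a + t * b) by rewrite mulr_ge0 // ltW.
rewrite H3 => H4; nra.
Qed.

Lemma dot_expand (x y : V) t :
  dot (x + t *: y) (x + t *: y) = dot x x + 2 * t * dot x y + t ^+ 2 * dot y y.
Proof.
rewrite !dotvDl !dotvDr !dotvZl !dotvZr (dotvC y x); ring.
Qed.

Definition Lmap m (F : 'I_m -> V) (l : 'rV[R]_m) : V := \sum_i l ord0 i *: F i.
Arguments Lmap {m}.

Lemma Lmap_comb m (F : 'I_m -> V) a b l l' :
  Lmap F (a *: l + b *: l') = a *: Lmap F l + b *: Lmap F l'.
Proof.
rewrite /Lmap !scaler_sumr -big_split; apply: eq_bigr => i _.
by rewrite !mxE scalerDl !scalerA.
Qed.

Lemma Lmap_delta m (F : 'I_m -> V) j : Lmap F (delta_mx ord0 j) = F j.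
Proof.
rewrite /Lmap (bigD1 j) //= big1 ?addr0; first by rewrite mxE !eqxx scale1r.
by move=> i /negbTE ij; rewrite mxE ij andbF scale0r.
Qed.

Lemma cont_Lmap m (F : 'I_m -> V) : continuous (Lmap F).
Proof.
rewrite /Lmap; apply: (@cont_sum _ _ _ _ _ (fun i (l : 'rV[R]_m) => l ord0 i *: F i)).
move=> i x; apply: continuousZr_tmp; exact: coord_continuous.
Qed.

Definition simplex m := [set l : 'rV[R]_m | (forall i, 0 <= l ord0 i) /\ \sum_i l ord0 i = 1].

Lemma simplex_compact m : compact (simplex m).
Proof.
have cB : compact [set v : 'rV[R]_m | forall i, `[0 : R, 1]%classic (v ord0 i)].
  by apply: (@rV_compact _ _ (fun=> `[0 : R, 1]%classic)) => i; exact: segment_compact.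
apply: (subclosed_compact _ cB).
  have -> : simplex m = (\bigcap_(i in [set: 'I_m]) [set l : 'rV[R]_m | 0 <= l ord0 i])
       `&` [set l | \sum_i l ord0 i = 1].
    apply/seteqP; split => l /=.
      by case=> h1 h2; split => // i _; exact: h1.
    by case=> h1 h2; split => // i; exact: h1.
  apply: closedI.
    apply: closed_bigI => i _.
    have := @coord_continuous R 1 m ord0 i; rewrite continuous_closedP.
    by move=> /(_ _ (@closed_ge _ 0)).
  have : continuous (fun l : 'rV[R]_m => \sum_i l ord0 i).
    apply: (@cont_sum _ _ _ _ _ (fun i (l : 'rV[R]_m) => l ord0 i)).
    by move=> i; exact: coord_continuous.
  by rewrite continuous_closedP => /(_ _ (@closed_eq _ 1)).
move=> l [h1 h2] i /=; rewrite in_itv /= h1 /=.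
by rewrite -h2 (bigD1 i) //= lerDl sumr_ge0.
Qed.

End Finite.
Arguments Lmap {R n m}.
Section FiniteSep.
Context {R : realType} {n : nat}.
Local Notation V := 'rV[R]_n.
Local Notation dot := (@dotv R n).
Variables (Phi : V -> R) (C : set V).
Hypothesis hPhi : gauge_like Phi.
Hypothesis hC : s_convex Phi C.

Definition Wset (s : seq V) := [set x : V | forall w, w \in s -> dot x w = 0].

Lemma sum_delta m (j : 'I_m) : \sum_i (delta_mx ord0 j : 'rV[R]_m) ord0 i = 1.
Proof.
rewrite (bigD1 j) //= big1 ?addr0; first by rewrite mxE !eqxx.
by move=> i /negbTE ij; rewrite mxE ij andbF.
Qed.

Lemma simplex_comb m (lam : 'rV[R]_m) j t : simplex m lam -> 0 <= t <= 1 ->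
  simplex m ((1 - t) *: lam + t *: delta_mx ord0 j).
Proof.
move=> [h1 h2] /andP[t0 t1]; split.
  move=> i; rewrite !mxE addr_ge0 // mulr_ge0 //; first by rewrite subr_ge0.
under eq_bigr do rewrite !mxE.
rewrite big_split /= -!mulr_sumr h2.
have -> : \sum_(i < m) ((i == j)%:R : R) = 1.
  by rewrite (bigD1 j) //= eqxx big1 ?addr0 // => i /negbTE ->.
by rewrite !mulr1; ring.
Qed.

Lemma finite_sep m (F : 'I_m.+1 -> V) (s : seq V) :
  (forall i, C (F i)) -> (forall i, Wset s (F i)) ->
  exists p, [/\ p != 0, Wset s p & forall i, 0 < dot (F i) p].
Proof.
move=> CF WF.
set Img := [set Lmap F l | l in simplex m.+1].
have Img0 : Img !=set0.
  exists (Lmap F (delta_mx ord0 ord0)), (delta_mx ord0 ord0) => //.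
  split; last exact: sum_delta.
  by move=> i; rewrite mxE ler0n.
have cImg : compact Img.
  apply: continuous_compact; last exact: simplex_compact.
  apply: continuous_subspaceT; exact: cont_Lmap.
have [p pI pmin] := EVT_min_rV Img0 cImg (continuous_subspaceT cont_dotvv).
move: (pI); rewrite in_setE => -[lam lamS plam].
have Kp : Kc C p.
  rewrite -plam; case: lamS => h1 h2.
  exact: (@Kc_conv R n Phi C hPhi hC).
have p0 : p != 0 by exact: (@Kc_neq0 R n Phi C hPhi hC _ Kp).
exists p; split => //.
  move=> w ws; rewrite -plam /Lmap dotv_suml big1 // => i _.
  by rewrite dotvZl WF // mulr0.
move=> j.
set a := dot p (F j - p).
have ha : 0 <= a.
  apply: (@var_ineq _ a (dot (F j - p) (F j - p))); first exact: dotv_ge0.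
  move=> t /andP[t0 t1].
  have qI : (p + t *: (F j - p)) \in Img.
    rewrite in_setE; exists ((1 - t) *: lam + t *: delta_mx ord0 j).
      by apply: simplex_comb => //; rewrite ltW.
    rewrite Lmap_comb Lmap_delta plam scalerBr scalerBl scale1r.
    by rewrite addrA addrAC.
  have := pmin _ qI; rewrite dot_expand -/a; lra.
have : 0 < dot p p by exact: dotv_gt0.
move: ha; rewrite /a dotvBr (dotvC p (F j)); lra.
Qed.

End FiniteSep.
Section SepW.
Context {R : realType} {n : nat}.
Local Notation V := 'rV[R]_n.
Local Notation dot := (@dotv R n).
Variables (Phi : V -> R) (C : set V).
Hypothesis hPhi : gauge_like Phi.
Hypothesis hC : s_convex Phi C.

Lemma Wset_closed (s : seq V) : closed (Wset s).
Proof.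
have -> : Wset s = \bigcap_(w in [set w | w \in s]) [set x : V | dot x w = 0].
  by apply/seteqP; split => x /= h w ws; apply: h.
by apply: closed_bigI => w _; exact: closed_dot_eq.
Qed.

Lemma WsetZ (s : seq V) t x : Wset s x -> Wset s (t *: x).
Proof. by move=> h w ws; rewrite dotvZl h // mulr0. Qed.

Lemma sep_W (s : seq V) : (forall c, C c -> Wset s c) ->
  exists u, [/\ Wset s u, dot u u = 1 & forall c, C c -> 0 <= dot c u].
Proof.
move=> CW.
set U := Wset s `&` [set u : V | dot u u = 1].
have cU : compact U.
  apply: (@compact_dot_bounded _ _ _ 1); last by move=> x [_ ->].
  apply: closedI; [exact: Wset_closed | exact: closed_dotvv_eq].
move: cU; rewrite compact_In0 => /(_ V C (fun c => U `&` [set u | 0 <= dot u c])).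
case.
- exists (fun c => [set u | 0 <= dot u c]) => // c _; exact: closed_dot_ge.
- move=> D' D'C.
  case E: (size D') => [|m].
    exists 0 => c /= cD; exfalso.
    have : c \in enum_fset D' by [].
    by move: E; rewrite /= => /size0nil ->.
  pose F := fun i : 'I_m.+1 => nth 0 (enum_fset D') i.
  have FD i : F i \in D'.
    have : F i \in enum_fset D' by apply: mem_nth; rewrite -[size _]/(size D') E ltn_ord.
    by [].
  have CF i : C (F i) by rewrite -in_setE; apply: D'C; exact: FD.
  have WF i : Wset s (F i) by apply: CW; exact: CF.
  have [p [p0 Wp pos]] := @finite_sep R n Phi C hPhi hC m F s CF WF.
  have [t t0 [_ tn]] := normalize p p0.
  exists (t *: p) => c /= cD; split; first by split; [exact: WsetZ | exact: tn].
  have ci : (index c (enum_fset D') < m.+1)%N.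
    by rewrite -E -[size D']/(size (enum_fset D')) index_mem.
  have -> : c = F (Ordinal ci) by rewrite /F /= nth_index.
  by rewrite dotvZl dotvC ltW // mulr_gt0.
- move=> u hu.
  case: hC => -[c0 Cc0] _ _.
  have [Uu _] := hu c0 Cc0.
  case: Uu => Wu uu.
  exists u; split => // c Cc.
  by have [_ /=] := hu c Cc; rewrite dotvC.
Qed.

End SepW.
Section Ortho.
Context {R : realType} {n : nat}.
Local Notation V := 'rV[R]_n.
Local Notation dot := (@dotv R n).

Fixpoint ortho (s : seq V) : Prop :=
  if s is u :: s' then [/\ u != 0, Wset s' u & ortho s'] else True.

Lemma ortho_nz s : ortho s -> forall i, (i < size s)%N -> nth 0 s i != 0.
Proof.
elim: s => [//|u s IH] /= [u0 Wu os] [|i] //= hi; exact: IH.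
Qed.

Lemma ortho_perp s : ortho s -> forall i j, (i < size s)%N -> (j < size s)%N ->
  i != j -> dot (nth 0 s i) (nth 0 s j) = 0.
Proof.
elim: s => [//|u s IH] /= [u0 Wu os] [|i] [|j] //= hi hj ij.
- by apply: Wu; exact: mem_nth.
- by rewrite dotvC; apply: Wu; exact: mem_nth.
- exact: IH.
Qed.

Lemma ortho_size s : ortho s -> (size s <= n)%N.
Proof.
move=> os; set k := size s.
pose A : 'M[R]_(k, n) := \matrix_(i < k, j < n) (nth 0 s i) ord0 j.
pose d : 'rV[R]_k := \row_i dot (nth 0 s i) (nth 0 s i).
have G : A *m A^T = diag_mx d.
  apply/matrixP => i j; rewrite !mxE.
  have -> : \sum_j0 A i j0 * A^T j0 j = dot (nth 0 s i) (nth 0 s j).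
    by apply: eq_bigr => l _; rewrite !mxE.
  case: (eqVneq i j) => [-> | ij]; first by rewrite mulr1n.
  rewrite mulr0n; apply: ortho_perp => //.
have U : A *m A^T \in unitmx.
  rewrite unitmxE G det_diag unitfE; apply/prodf_neq0 => i _.
  by rewrite mxE gt_eqF // dotv_gt0 // ortho_nz.
have := mxrankM_maxl A A^T; rewrite (mxrank_unit U) => h.
exact: leq_trans h (rank_leq_col A).
Qed.

Lemma orthoW (s : seq V) u : ortho s -> u != 0 -> Wset s u -> ortho (u :: s).
Proof. by move=> *; split. Qed.

End Ortho.
Section Main.
Context {R : realType} {n : nat}.
Local Notation V := 'rV[R]_n.
Local Notation dot := (@dotv R n).
Variables (Phi : V -> R).
Hypothesis hPhi : gauge_like Phi.

Lemma closed_dot_le (y : V) a : closed [set x : V | dot x y <= a].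
Proof.
have := cont_dotl y; rewrite continuous_closedP => /(_ _ (@closed_le _ a)).
by [].
Qed.

Lemma comb_pos (C : set V) u v0 : compact C ->
  (forall c, C c -> 0 <= dot c u) ->
  (forall c, C c -> dot c u = 0 -> 0 < dot c v0) ->
  exists v, forall c, C c -> 0 < dot c v.
Proof.
move=> cC hu hv.
set C1 := C `&` [set c | dot c v0 <= 0].
have cC1 : compact C1 by apply: compact_closedI => //; exact: closed_dot_le.
case: (pselect (C1 !=set0)) => [C10|C10]; last first.
  exists (u + v0) => c Cc; rewrite dotvDr.
  have [h|h] := ltP 0 (dot c v0); first by have := hu c Cc; lra.
  by exfalso; apply: C10; exists c.
have [c1 c1I c1min] := EVT_min_rV C10 cC1 (continuous_subspaceT (cont_dotl u)).
have [c2 c2I c2min] := EVT_min_rV C10 cC1 (continuous_subspaceT (cont_dotl v0)).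
move: c1I c2I; rewrite !in_setE => -[Cc1 c1v] [Cc2 c2v].
set g := dot c1 u; set M := - dot c2 v0.
have M0 : 0 <= M by rewrite /M oppr_ge0.
have g0 : 0 < g.
  rewrite lt_neqAle hu // andbT; apply/eqP => /esym h.
  by have := hv c1 Cc1 h; move: c1v => /=; lra.
exists (u + (g / (M + 1)) *: v0) => c Cc; rewrite dotvDr dotvZr.
have e0 : 0 < g / (M + 1) by rewrite divr_gt0 // ltr_wpDl.
have [h|h] := ltP 0 (dot c v0).
  by have := hu c Cc; have := mulr_gt0 e0 h; lra.
have cI : c \in C1 by rewrite in_setE; split.
have h1 := c1min c cI; have h2 := c2min c cI.
rewrite -/g in h1.
have h3 : - M <= dot c v0 by rewrite /M opprK.
have h4 : g / (M + 1) * dot c v0 >= - (g / (M + 1) * M).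
  by rewrite -mulrN ler_pM2l.
have h5 : g / (M + 1) * M < g.
  by rewrite mulrAC ltr_pdivrMr ?ltr_wpDl // ltr_pM2l //; lra.
lra.
Qed.


Lemma scomb_dot (C : set V) x y l w : s_convex Phi C -> C x -> C y -> 0 <= l <= 1 ->
  dot x w = 0 -> dot y w = 0 -> dot (scomb Phi l x y) w = 0.
Proof.
move=> _ _ _ _ hx hy; rewrite /scomb /rho; case: ifP => _; first exact: dotv0l.
by rewrite dotvZl dotvDl !dotvZl hx hy !mulr0 addr0 mulr0.
Qed.

Lemma sepQ k : forall (s : seq V), (n < size s + k)%N -> ortho s ->
  forall C : set V, s_convex Phi C -> compact C -> (forall c, C c -> Wset s c) ->
  exists v, forall c, C c -> 0 < dot c v.
Proof.
elim: k => [|k IH] s hs os C hC cC CW.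
  by move: hs; rewrite addn0 => hs; have := ortho_size s os; rewrite leqNgt hs.
have [u [Wu uu hu]] := @sep_W R n Phi C hPhi hC s CW.
have u0 : u != 0 by apply/eqP => u0; move: uu; rewrite u0 dotv0l => /eqP; rewrite eq_sym oner_eq0.
set C0 := C `&` [set c | dot c u = 0].
case: (pselect (C0 !=set0)) => [C00|C00]; last first.
  exists u => c Cc; rewrite lt_neqAle hu // andbT; apply/eqP => h.
  by apply: C00; exists c; split.
have hC0 : s_convex Phi C0.
  case: (hC) => hne hS hcomb; split => //.
    by move=> x [Cx _]; exact: hS.
  move=> x y l [Cx xu] [Cy yu] hl; split; first exact: hcomb.
  exact: (@scomb_dot C x y l u hC Cx Cy hl xu yu).
have cC0 : compact C0 by apply: compact_closedI => //; exact: closed_dot_eq.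
have CW0 : forall c, C0 c -> Wset (u :: s) c.
  move=> c [Cc cu] w; rewrite in_cons => /orP [/eqP -> //|ws].
  exact: CW.
have hs2 : (n < size (u :: s) + k)%N by rewrite /= addSnnS.
have [v0 hv0] := IH (u :: s) hs2 (orthoW s u os u0 Wu) C0 hC0 cC0 CW0.
apply: (@comb_pos C u v0 cC hu) => c Cc cu; apply: hv0; by split.
Qed.

End Main.
Section Final.
Context {R : realType} {n : nat}.
Local Notation V := 'rV[R]_n.
Local Notation dot := (@dotv R n).
Variables (Phi : V -> R).
Hypothesis hPhi : gauge_like Phi.

Lemma S_bounded : (0 < n)%N -> exists M, forall x, Phi x = 1 -> dot x x <= M.
Proof.
move=> n0; set E := [set x : V | dot x x = 1].
have cE : compact E by apply: (@compact_dot_bounded _ _ _ 1) => [|x ->//]; exact: closed_dotvv_eq.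
have E0 : E !=set0.
  exists (delta_mx ord0 (Ordinal n0)); rewrite /E /= /dotv (bigD1 (Ordinal n0)) //=.
  rewrite big1 ?addr0; first by rewrite mxE !eqxx mulr1.
  by move=> i /negbTE h; rewrite mxE h andbF mul0r.
have cPhi : continuous Phi by case: hPhi.
have [e eE emin] := EVT_min_rV E0 cE (continuous_subspaceT cPhi).
move: eE; rewrite in_setE /E /= => ee.
have e0 : e != 0 by apply/eqP => e0; move: ee; rewrite e0 dotv0l => /eqP; rewrite eq_sym oner_eq0.
have m0 : 0 < Phi e by exact: Phi_gt0.
exists ((Phi e)^-1 ^+ 2) => x Px.
have x0 : x != 0 by apply/eqP => x0; move: Px; rewrite x0 (Phi0 Phi hPhi) => /eqP; rewrite eq_sym oner_eq0.
have [t t0 [_ tx]] := normalize x x0.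
have : Phi e <= Phi (t *: x) by apply: emin; rewrite in_setE.
case: hPhi => _ _ hZ _; rewrite hZ; last exact: ltW.
rewrite Px mulr1 => het.
move: tx; rewrite dotvZl dotvZr mulrA => tx.
have hd := dotv_ge0 x.
rewrite exprVn -div1r ler_pdivlMr ?exprn_gt0 //.
have : Phi e ^+ 2 <= t ^+ 2 by rewrite lerXn2r // ?nnegrE ltW // (lt_le_trans m0 het).
rewrite -expr2 in tx; nra.
Qed.

Lemma Wset_nil (c : V) : Wset [::] c.
Proof. by []. Qed.

End Final.

Theorem mainTheorem4 (R : realType) (n : nat) (Phi : 'rV[R]_n -> R)
    (C : set 'rV[R]_n) :
  (2 <= n)%N -> gauge_like Phi -> s_convex Phi C ->
  (exists u0 : 'rV[R]_n, enorm u0 = 1 /\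
     C `<=` [set x | 0 <= dotv x u0] `&` Ssph Phi) /\
  (closed_in_S Phi C ->
   exists (u0 : 'rV[R]_n) (alpha : R), [/\ enorm u0 = 1, 0 < alpha,
     C `<=` [set x | alpha <= dotv x u0] `&` Ssph Phi &
     C `<=` [set x | Ssph Phi x /\ 0 < dotv x u0]]).
Proof.
move=> n2 hPhi hC.
have CS : forall c, C c -> Ssph Phi c by case: hC => _ h _.
split.
  have [u [_ uu hu]] := @sep_W R n Phi C hPhi hC [::] (fun c _ => Wset_nil c).
  exists u; split; first by rewrite /enorm uu sqrtr1.
  by move=> c Cc; split; [exact: hu | exact: CS].
case=> F [cF CE].
have n0 : (0 < n)%N by apply: leq_trans n2.
have [M hM] := S_bounded Phi hPhi n0.
have cC : compact C.
  apply: (@compact_dot_bounded _ _ _ M); last by move=> x /CS; exact: hM.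
  rewrite CE; apply: closedI => //.
  have cPhi : continuous Phi by case: hPhi.
  by move: cPhi; rewrite continuous_closedP => /(_ _ (@closed_eq _ 1)).
have hn1 : (n < size ([::] : seq 'rV[R]_n) + n.+1)%N by rewrite /= add0n.
have [v hv] := @sepQ R n Phi hPhi n.+1 [::] hn1 I C hC cC
  (fun c _ => Wset_nil c).
have C0 : C !=set0 by case: hC.
have [c0 c0C c0min] := EVT_min_rV C0 cC (continuous_subspaceT (cont_dotl v)).
move: c0C; rewrite in_setE => Cc0.
have v0 : v != 0 by apply/eqP => v0; have := hv c0 Cc0; rewrite v0 dotv0r ltxx.
have [t t0 [tn _]] := normalize v v0.
exists (t *: v), (t * dotv c0 v); split => //.
- by rewrite mulr_gt0 // hv.
- move=> c Cc; split; last exact: CS.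
  rewrite /= dotvZr ler_pM2l //; apply: c0min; by rewrite in_setE.
- move=> c Cc; split; first exact: CS.
  by rewrite dotvZr mulr_gt0 // hv.
Qed.
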